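(* For $0\le k<n$, the function $\frac{S_{k+1}}{S_k}$ belongs to $\mathcal{S}_n$, where $S_k(x_1,\dots,x_n)=\binom{n}{k}^{-1}\sum_{1\le i_1<\dots<i_k\le n}x_{i_1}\cdots x_{i_k}$ for $k=1,\dots,n$ and $S_0=1$.
   Context: $\Gamma_+=\{x\in\mathbb{R}^n: x_i>0\ \forall i\}$. $\mathcal{C}_n$ is the class of functions $f:\Gamma_+\to\mathbb{R}$ which are $C^\infty$, homogeneous of degree one, strictly monotone increasing ($\partial f/\partial x_i>0$ for each $i$), concave, and inverse-concave, meaning $f^*(x_1,\dots,x_n)=-f(x_1^{-1},\dots,x_n^{-1})$ is concave on $\Gamma_+$. $\mathcal{S}_n$ is the subclass of symmetric functions (invariant under permutations of the arguments) in $\mathcal{C}_n$. *)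

(* Defs.v *)
From HB Require Import structures.
From mathcomp Require Import all_boot all_order all_algebra all_fingroup.
From mathcomp Require Import all_classical all_reals all_analysis.
Set Implicit Arguments. Unset Strict Implicit. Unset Printing Implicit Defensive.
Import Order.TTheory GRing.Theory Num.Theory.
Import numFieldNormedType.Exports.
Local Open Scope classical_set_scope.
Local Open Scope ring_scope.

Section Defs.
Variables (R : realType) (n : nat).

Definition Gamma_plus : set 'rV[R]_n := [set x | forall i : 'I_n, 0 < x ord0 i].

Definition basis_vec (i : 'I_n) : 'rV[R]_n := delta_mx ord0 i.

Fixpoint iter_partial (ds : seq 'I_n) (f : 'rV[R]_n -> R) : 'rV[R]_n -> R :=
  match ds with
  | [::] => f
  | i :: ds' => fun x => derive (iter_partial ds' f) x (basis_vec i)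
  end.

Definition smooth_on_Gamma (f : 'rV[R]_n -> R) : Prop :=
  forall ds : seq 'I_n,
    {within Gamma_plus, continuous (iter_partial ds f)} /\
    (forall x, Gamma_plus x -> forall i, derivable (iter_partial ds f) x (basis_vec i)).

Definition homogeneous1 (f : 'rV[R]_n -> R) : Prop :=
  forall x, Gamma_plus x -> forall t : R, 0 < t -> f (t *: x) = t * f x.

Definition strictly_increasing (f : 'rV[R]_n -> R) : Prop :=
  forall x, Gamma_plus x -> forall i, 0 < derive f x (basis_vec i).

Definition concave_on_Gamma (f : 'rV[R]_n -> R) : Prop :=
  forall x y, Gamma_plus x -> Gamma_plus y -> forall t : R, 0 <= t -> t <= 1 ->
    (1 - t) * f x + t * f y <= f ((1 - t) *: x + t *: y).

Definition inverse_dual (f : 'rV[R]_n -> R) : 'rV[R]_n -> R :=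
  fun x => - f (map_mx (fun a => a^-1) x).

Definition inverse_concave (f : 'rV[R]_n -> R) : Prop :=
  concave_on_Gamma (inverse_dual f).

Definition class_C (f : 'rV[R]_n -> R) : Prop :=
  [/\ smooth_on_Gamma f, homogeneous1 f, strictly_increasing f,
      concave_on_Gamma f & inverse_concave f].

Definition symmetric_on_Gamma (f : 'rV[R]_n -> R) : Prop :=
  forall (s : 'S_n) x, Gamma_plus x -> f (col_perm s x) = f x.

Definition class_S (f : 'rV[R]_n -> R) : Prop :=
  class_C f /\ symmetric_on_Gamma f.

(* normalized elementary symmetric function S_k = binom(n,k)^{-1} sigma_k;
   for k = 0 this is 1 *)
Definition S_elem (k : nat) (x : 'rV[R]_n) : R :=
  ('C(n, k))%:R^-1 * \sum_(A : {set 'I_n} | #|A| == k) \prod_(i in A) x ord0 i.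

End Defs.

(* Main.v *)
Require Import Defs.
From HB Require Import structures.
From mathcomp Require Import all_boot all_order all_algebra all_fingroup.
From mathcomp Require Import all_classical all_reals all_analysis.
From mathcomp Require Import lra ring zify.
Set Implicit Arguments. Unset Strict Implicit. Unset Printing Implicit Defensive.
Import Order.TTheory GRing.Theory Num.Theory.
Import numFieldNormedType.Exports.
Local Open Scope classical_set_scope.
Local Open Scope ring_scope.
Section An.
Variables (R : realType) (n : nat).
Notation V := 'rV[R]_n.

Lemma line_cvg (f : V -> R) (x v : V) (c : R) :
  (forall h : R, h != 0 -> f (h *: v + x) = f x + h * c) ->
  (fun h : R => h^-1 *: ((f \o shift x) (h *: v) - f x)) @ 0^' --> c.
Proof.
move=> H.
apply: (@cvg_trans _ ((fun _ : R => c) @ (0:R)^')); last exact: cvg_cst.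
apply: near_eq_cvg; near=> h.
have hn0 : h != 0 by near: h; exact: nbhs_dnbhs_neq.
by rewrite /= H // addrC addKr /GRing.scale /= mulKf.
Unshelve. all: by end_near. Qed.

Lemma line_deriv (f : V -> R) (x v : V) (c : R) :
  (forall h : R, h != 0 -> f (h *: v + x) = f x + h * c) ->
  derivable f x v /\ derive f x v = c.
Proof.
move=> H; have HE := line_cvg H.
split; first exact: (cvgP c HE).
exact: cvg_lim.
Qed.

Lemma coord_deriv (j : 'I_n) (x v : V) :
  derivable (fun y : V => y ord0 j) x v /\ derive (fun y : V => y ord0 j) x v = v ord0 j.
Proof. by apply: line_deriv => h _; rewrite !mxE addrC. Qed.

Lemma mul_deriv (f g : V -> R) x v : derivable f x v -> derivable g x v ->
  derivable (fun y => f y * g y) x v /\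
  derive (fun y => f y * g y) x v = f x * derive g x v + g x * derive f x v.
Proof.
move=> df dg; split; first exact: (derivableM df dg).
exact: (deriveM df dg).
Qed.

Lemma add_deriv (f g : V -> R) x v : derivable f x v -> derivable g x v ->
  derivable (fun y => f y + g y) x v /\
  derive (fun y => f y + g y) x v = derive f x v + derive g x v.
Proof.
move=> df dg; split; first exact: (derivableD df dg).
exact: (deriveD df dg).
Qed.

Lemma inv_deriv (f : V -> R) x v : f x != 0 -> derivable f x v ->
  derivable (fun y => (f y)^-1) x v /\
  derive (fun y => (f y)^-1) x v = - ((f x)^-1 * (f x)^-1) * derive f x v.
Proof.
move=> fx df; split; first exact: (derivableV fx df).
by rewrite (deriveV fx df) expr2 invfM.
Qed.

End An.
Section An2.
Variables (R : realType) (n : nat).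
Notation V := 'rV[R]_n.

Inductive P : (V -> R) -> Prop :=
| Pc (c : R) : P (fun _ => c)
| Px (j : 'I_n) : P (fun y => y ord0 j)
| Padd f g : P f -> P g -> P (fun y => f y + g y)
| Pmul f g : P f -> P g -> P (fun y => f y * g y).

Lemma P_ext f g : f =1 g -> P f -> P g.
Proof. by move=> /funext ->. Qed.

Lemma P_sum (I : Type) (r : seq I) (Pr : pred I) (F : I -> V -> R) :
  (forall i, P (F i)) -> P (fun y => \sum_(i <- r | Pr i) F i y).
Proof.
move=> HF; elim: r => [|a r IH].
  by apply: (P_ext _ (Pc 0)) => y; rewrite big_nil.
case Pa: (Pr a).
  by apply: (P_ext _ (Padd (HF a) IH)) => y; rewrite big_cons Pa.
by apply: (P_ext _ IH) => y; rewrite big_cons Pa.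
Qed.

Lemma P_prod (I : Type) (r : seq I) (Pr : pred I) (F : I -> V -> R) :
  (forall i, P (F i)) -> P (fun y => \prod_(i <- r | Pr i) F i y).
Proof.
move=> HF; elim: r => [|a r IH].
  by apply: (P_ext _ (Pc 1)) => y; rewrite big_nil.
case Pa: (Pr a).
  by apply: (P_ext _ (Pmul (HF a) IH)) => y; rewrite big_cons Pa.
by apply: (P_ext _ IH) => y; rewrite big_cons Pa.
Qed.

Lemma P_deriv f : P f -> forall v : V, exists2 f', P f' &
  forall x, derivable f x v /\ derive f x v = f' x.
Proof.
elim=> {f} [c|j|f g Pf IHf Pg IHg|f g Pf IHf Pg IHg] v.
- exists (fun _ => 0); first exact: Pc.
  by move=> x; apply: line_deriv => h _; rewrite mulr0 addr0.
- exists (fun _ => v ord0 j); first exact: Pc.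
  by move=> x; apply: coord_deriv.
- have [f' Pf' Hf] := IHf v; have [g' Pg' Hg] := IHg v.
  exists (fun y => f' y + g' y); first exact: Padd.
  move=> x; have [df ef] := Hf x; have [dg eg] := Hg x.
  by have [? ->] := add_deriv df dg; rewrite ef eg.
- have [f' Pf' Hf] := IHf v; have [g' Pg' Hg] := IHg v.
  exists (fun y => f y * g' y + g y * f' y); first exact: Padd (Pmul Pf Pg') (Pmul Pg Pf').
  move=> x; have [df ef] := Hf x; have [dg eg] := Hg x.
  by have [? ->] := mul_deriv df dg; rewrite ef eg.
Qed.

Lemma P_cont f : P f -> continuous f.
Proof.
elim=> {f} [c|j|f g Pf IHf Pg IHg|f g Pf IHf Pg IHg] x.
- exact: cst_continuous.
- exact: coord_continuous.
- exact: (cvgD (IHf x) (IHg x)).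
- exact: (cvgM (IHf x) (IHg x)).
Qed.

Inductive G (q : V -> R) : (V -> R) -> Prop :=
| GP f : P f -> G q f
| Ginv : G q (fun y => (q y)^-1)
| Gadd f g : G q f -> G q g -> G q (fun y => f y + g y)
| Gmul f g : G q f -> G q g -> G q (fun y => f y * g y).

Lemma G_deriv q f : P q -> G q f -> forall v : V, exists2 f', G q f' &
  forall x, q x != 0 -> derivable f x v /\ derive f x v = f' x.
Proof.
move=> Pq; elim=> {f} [f Pf| |f g Pf IHf Pg IHg|f g Pf IHf Pg IHg] v.
- have [f' Pf' Hf] := P_deriv Pf v.
  by exists f'; [exact: GP | move=> x _; exact: Hf].
- have [q' Pq' Hq] := P_deriv Pq v.
  exists (fun y => ((fun _ => -1) y * ((q y)^-1 * (q y)^-1)) * q' y).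
    exact: (Gmul (Gmul (GP q (Pc (-1))) (Gmul (Ginv q) (Ginv q))) (GP q Pq')).
  move=> x qx; have [dq eq] := Hq x.
  by have [? ->] := inv_deriv qx dq; rewrite eq mulN1r.
- have [f' Pf' Hf] := IHf v; have [g' Pg' Hg] := IHg v.
  exists (fun y => f' y + g' y); first exact: Gadd.
  move=> x qx; have [df ef] := Hf x qx; have [dg eg] := Hg x qx.
  by have [? ->] := add_deriv df dg; rewrite ef eg.
- have [f' Pf' Hf] := IHf v; have [g' Pg' Hg] := IHg v.
  exists (fun y => f y * g' y + g y * f' y); first exact: Gadd (Gmul Pf Pg') (Gmul Pg Pf').
  move=> x qx; have [df ef] := Hf x qx; have [dg eg] := Hg x qx.
  by have [? ->] := mul_deriv df dg; rewrite ef eg.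
Qed.

Lemma G_cont q f : P q -> G q f -> forall x, q x != 0 -> {for x, continuous f}.
Proof.
move=> Pq; elim=> {f} [f Pf| |f g Pf IHf Pg IHg|f g Pf IHf Pg IHg] x qx.
- exact: P_cont.
- have hq : q @ x --> q x by apply: P_cont.
  exact: (cvgV qx hq).
- exact: (cvgD (IHf x qx) (IHg x qx)).
- exact: (cvgM (IHf x qx) (IHg x qx)).
Qed.

Lemma Gamma_near (x : V) : Gamma_plus x -> \forall y \near x, Gamma_plus y.
Proof.
move=> Gx.
suff H : \forall y \near x, forall i : 'I_n, 0 < (y : V) ord0 i.
  by apply: filterS H => y Hy.
apply: (@filter_forall _ 'I_n (fun i (y : V) => 0 < y ord0 i) (nbhs x)).
move=> i.
have hc : (fun y : V => y ord0 i) @ x --> x ord0 i by exact: (@coord_continuous R 1 n ord0 i x).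
exact: (cvgr_gt _ hc 0 (Gx i)).
Qed.

Lemma G_smooth q f : P q -> (forall x, Gamma_plus x -> 0 < q x) -> G q f ->
  smooth_on_Gamma f.
Proof.
move=> Pq qpos Gf.
have key : forall ds, exists2 F, G q F & forall x, Gamma_plus x -> iter_partial ds f x = F x.
  elim=> [|i ds [F GF HF]]; first by exists f.
  have [F' GF' HF'] := G_deriv Pq GF (basis_vec R i).
  exists F' => // x Gx /=.
  have qx : q x != 0 by rewrite gt_eqF ?qpos.
  rewrite -(HF' x qx).2; apply: near_eq_derive.
  by apply: filterS (Gamma_near Gx) => y Gy; apply: HF.
move=> ds; have [F GF HF] := key ds; split.
  apply: (@subspace_eq_continuous _ _ _ F).
    by move=> y; rewrite inE => Gy; rewrite /from_subspace HF.
  apply: continuous_in_subspaceT => y; rewrite inE => Gy.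
  by apply: (G_cont Pq GF); rewrite gt_eqF ?qpos.
move=> x Gx i.
have qx : q x != 0 by rewrite gt_eqF ?qpos.
apply: (@near_eq_derivable _ _ _ F).
  by apply: filterS (Gamma_near Gx) => y Gy; rewrite HF.
have [F' _ H] := G_deriv Pq GF (basis_vec R i); exact: (H x qx).1.
Qed.
End An2.
Section Alg.
Variables (R : realType) (n : nat).
Notation V := 'rV[R]_n.
Implicit Types (A B C : {set 'I_n}) (x : V).

Definition sig (j : nat) A x : R :=
  \sum_(B : {set 'I_n} | (B \subset A) && (#|B| == j)) \prod_(i in B) x ord0 i.

Lemma set_ind (Pp : {set 'I_n} -> Prop) : Pp finset.set0 ->
  (forall a A, a \notin A -> Pp A -> Pp (a |: A)) -> forall A, Pp A.
Proof.
move=> H0 HS A; move: {2}#|A| (erefl #|A|) => m; elim: m A => [|m IH] A hA.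
  by rewrite (cards0_eq hA).
have /card_gt0P [a aA] : (0 < #|A|)%N by rewrite hA.
rewrite -(finset.setD1K aA); apply: HS; first by rewrite setD11.
by apply: IH; move: hA; rewrite (cardsD1 a) aA add1n => -[].
Qed.

Lemma sig0 A x : sig 0 A x = 1.
Proof.
rewrite /sig (big_pred1 finset.set0) ?big_set0 // => B /=.
rewrite cards_eq0; case: eqP => [->|]; first by rewrite finset.sub0set.
by rewrite andbF.
Qed.

Lemma sigS j a A x : a \notin A ->
  sig j.+1 (a |: A) x = sig j.+1 A x + x ord0 a * sig j A x.
Proof.
move=> aA.
have eqb : forall B, ((B \subset a |: A) && (a \notin B)) = (B \subset A).
  move=> B; apply/andP/idP => [[/fintype.subsetP sB aB]|sBA].
    apply/fintype.subsetP => y yB; have := sB y yB; rewrite in_setU1 => /orP[/eqP ya|//].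
    by rewrite -ya yB in aB.
  split; first exact: fintype.subset_trans sBA (finset.subsetUr _ _).
  apply/negP => aB; move/fintype.subsetP: sBA => /(_ a aB).
  by rewrite (negPf aA).
rewrite /sig (bigID (fun B => a \in B)) /= addrC; congr (_ + _).
  apply: eq_bigl => B; rewrite -andbA andbC -andbA [(a \notin B) && _]andbC eqb.
  by rewrite andbC.
rewrite big_distrr /=.
rewrite (reindex_onto (fun C => a |: C) (fun B => B :\ a)) /=; last first.
  by move=> B /andP[_ aB]; exact: finset.setD1K aB.
apply: eq_big => C.
  case aC: (a \in C).
    have -> : ((a |: C) :\ a == C) = false.
      by apply/negbTE/eqP => E; move: aC; rewrite -E setD11.
    rewrite andbF; symmetry; apply/negbTE/andP => -[/fintype.subsetP sCA _].
    by move: aA; rewrite sCA.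
  rewrite setU1K ?aC // eqxx setU11 andbT cardsU1 aC add1n eqSS.
  rewrite andbT; congr (_ && _); apply/idP/idP => [sC|sC].
    by rewrite -eqb aC andbT (fintype.subset_trans (finset.subsetUr _ _) sC).
  by rewrite finset.setUS.
move=> /andP[_ /eqP cC]; rewrite big_setU1 //=.
by rewrite -cC setD11.
Qed.

End Alg.
Section Alg2.
Variables (R : realType) (n : nat).
Notation V := 'rV[R]_n.
Notation T := (setTfor 'I_n).
Implicit Types (A B C : {set 'I_n}) (x : V).

Lemma sig_big j A x : (#|A| < j)%N -> sig j A x = 0.
Proof.
move=> hj; rewrite /sig big_pred0 // => B; apply/negbTE/andP => -[sBA /eqP cB].
by have := subset_leq_card sBA; rewrite cB; lia.
Qed.

Lemma sig_nn j A x : Gamma_plus x -> 0 <= sig j A x.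
Proof.
move=> Gx; apply: sumr_ge0 => B _; apply: prodr_ge0 => i _; exact: ltW (Gx i).
Qed.

Lemma sig_pos j A x : Gamma_plus x -> (j <= #|A|)%N -> 0 < sig j A x.
Proof.
move=> Gx; elim/set_ind: A j => [|a A aA IH] j.
  by rewrite cards0 leqn0 => /eqP ->; rewrite sig0.
case: j => [|j]; first by rewrite sig0.
rewrite cardsU1 aA add1n ltnS => hj; rewrite sigS //.
have := sig_nn j.+1 A Gx; have := IH j hj; have := Gx a.
by move=> h1 h2 h3; apply: ltr_wpDl => //; apply: mulr_gt0.
Qed.

Lemma sig_hom j A x (t : R) : sig j A (t *: x) = t ^+ j * sig j A x.
Proof.
rewrite /sig mulr_sumr; apply: eq_bigr => B /andP[_ /eqP cB].
rewrite -cB -prodr_const -big_split /=; apply: eq_bigr => i _; by rewrite mxE.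
Qed.

Lemma S_elemE j x : S_elem j x = ('C(n, j))%:R^-1 * sig j T x.
Proof. by rewrite /S_elem /sig; congr (_ * _); apply: eq_bigl => B; rewrite finset.subsetT. Qed.

Lemma sig_perm j (s : 'S_n) x : sig j T (col_perm s x) = sig j T x.
Proof.
rewrite /sig [RHS](reindex_inj (imset_inj (@perm_inj _ s))) /=.
apply: eq_big => B; first by rewrite !finset.subsetT card_imset //; exact: perm_inj.
move=> _; rewrite big_imset /=; last by move=> ? ? _ _; apply: perm_inj.
by apply: eq_bigr => i _; rewrite mxE.
Qed.

Lemma sig_compl j x : Gamma_plus x -> (j <= n)%N ->
  sig j T (map_mx (fun a => a^-1) x) * \prod_(i < n) x ord0 i = sig (n - j) T x.
Proof.
move=> Gx hj; rewrite /sig mulr_suml.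
rewrite [RHS](reindex_inj (@finset.setC_inj _)) /=.
apply: eq_big => B.
  rewrite !finset.subsetT /=; have := cardsC B; rewrite card_ord => hc.
  move: hc; set m1 := #|~: B|; set m0 := #|B| => hc.
  apply/eqP/eqP; lia.
move=> _; rewrite [X in _ * X](bigID (fun i => i \in B)) /= mulrA -big_split /=.
rewrite big1 ?mul1r; last by move=> i iB; rewrite mxE mulVf // gt_eqF.
by apply: eq_bigl => i; rewrite inE.
Qed.

Lemma sig_decomp j (i : 'I_n) x :
  sig j.+1 T x = sig j.+1 (T :\ i) x + x ord0 i * sig j (T :\ i) x.
Proof.
by rewrite -sigS ?setD11 // finset.setD1K // finset.in_setT.
Qed.

Lemma sig_inv j (i : 'I_n) x (h : R) :
  sig j (T :\ i) (h *: basis_vec R i + x) = sig j (T :\ i) x.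
Proof.
apply: eq_bigr => B /andP[sB _]; apply: eq_bigr => l lB.
have : l \in T :\ i by move/fintype.subsetP: sB; apply.
rewrite !inE andbT => li.
by rewrite /basis_vec !mxE (negPf li) andbF mulr0 add0r.
Qed.

Lemma setU1D1 a i A : i != a -> (a |: A) :\ i = a |: (A :\ i).
Proof.
move=> ia; apply/finset.setP => y; rewrite !inE.
by case: (eqVneq y a) => [->|]; [rewrite eq_sym (negPf ia)|].
Qed.

Lemma sig_count j A x :
  \sum_(i in A) x ord0 i * sig j (A :\ i) x = j.+1%:R * sig j.+1 A x.
Proof.
elim/set_ind: A j => [|a A aA IH] j.
  by rewrite big_set0 sig_big ?cards0 // mulr0.
rewrite big_setU1 //= setU1K //.
have E : forall i, i \in A -> (a |: A) :\ i = a |: (A :\ i).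
  by move=> i iA; apply: setU1D1; apply: contraNneq aA => <-.
rewrite (eq_bigr (fun i => x ord0 i * sig j (a |: (A :\ i)) x)); last first.
  by move=> i iA; rewrite E.
case: j => [|j].
  have IH0 := IH 0%N.
  rewrite (eq_bigr (fun i => x ord0 i)) in IH0; last by move=> i _; rewrite sig0 mulr1.
  rewrite (eq_bigr (fun i => x ord0 i)); last by move=> i _; rewrite sig0 mulr1.
  rewrite IH0 sigS // !sig0; ring.
rewrite (eq_bigr (fun i => x ord0 i * sig j.+1 (A :\ i) x +
   x ord0 a * (x ord0 i * sig j (A :\ i) x))); last first.
  move=> i _; rewrite sigS; first ring.
  by rewrite !inE negb_and aA orbT.
rewrite big_split /= -mulr_sumr IH IH sigS //.
rewrite !mulrS; ring.
Qed.

End Alg2.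
Section Alg3.
Variables (R : realType) (n : nat).
Notation V := 'rV[R]_n.
Notation T := (setTfor 'I_n).
Implicit Types (A B C : {set 'I_n}) (x y : V).

Lemma sig_next0 m B x : Gamma_plus x -> sig m B x = 0 -> sig m.+1 B x = 0.
Proof.
move=> Gx h0; case: (leqP m.+1 #|B|) => hm.
  by have := sig_pos Gx (ltnW hm); rewrite h0 ltxx.
by rewrite sig_big.
Qed.

Lemma newton x : Gamma_plus x -> forall B j,
  0 <= sig j.+1 B x ^+ 2 - sig j.+2 B x * sig j B x /\
  ((j.+1 <= #|B|)%N -> 0 < sig j.+1 B x ^+ 2 - sig j.+2 B x * sig j B x).
Proof.
move=> Gx; elim/set_ind => [|a B aB IH] j.
  rewrite (sig_big (j:=j.+1) x) ?cards0 // (sig_big (j:=j.+2) x) ?cards0 //.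
  split; first by rewrite expr0n /= mul0r subr0.
  by [].
have cB : #|a |: B| = #|B|.+1 by rewrite cardsU1 aB.
rewrite cB ltnS.
have xa := Gx a.
case: j => [|j].
  rewrite !sigS // !sig0; have [q0 _] := IH 0%N; rewrite sig0 in q0.
  have s1 := sig_nn 1 B Gx.
  suff h : 0 < (sig 1 B x + x ord0 a * 1) ^+ 2 - (sig 2 B x + x ord0 a * sig 1 B x) * 1.
    by split; [apply: ltW | move=> _].
  have -> : (sig 1 B x + x ord0 a * 1) ^+ 2 - (sig 2 B x + x ord0 a * sig 1 B x) * 1
     = (sig 1 B x ^+ 2 - sig 2 B x * 1) + x ord0 a * sig 1 B x + x ord0 a ^+ 2 by ring.
  have h2 : 0 < x ord0 a ^+ 2 by rewrite exprn_gt0.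
  have h3 : 0 <= x ord0 a * sig 1 B x by rewrite mulr_ge0 // ltW.
  lra.
have [Q0 Q0s] := IH j; have [Q1 _] := IH j.+1.
rewrite !sigS //.
set s0 := sig j B x in Q0 Q0s Q1 *; set s1 := sig j.+1 B x in Q0 Q0s Q1 *.
set s2 := sig j.+2 B x in Q0 Q0s Q1 *; set s3 := sig j.+3 B x in Q0 Q0s Q1 *.
have n0 : 0 <= s0 by apply: sig_nn. have n1 : 0 <= s1 by apply: sig_nn.
have n2 : 0 <= s2 by apply: sig_nn. have n3 : 0 <= s3 by apply: sig_nn.
have M : 0 <= s2 * s1 - s3 * s0.
  case: (eqVneq s2 0) => [e2|ne2].
    by rewrite e2 /s3 (sig_next0 Gx e2) !mul0r subrr.
  have p2 : 0 < s2 by rewrite lt_def ne2 n2.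
  have p1 : 0 < s1.
    rewrite lt_def n1 andbT; apply/eqP => e1; move: ne2.
    by rewrite /s2 (sig_next0 Gx e1) eqxx.
  rewrite subr_ge0.
  have h1 : s3 * s1 <= s2 ^+ 2 by rewrite -subr_ge0.
  have h0 : s2 * s0 <= s1 ^+ 2 by rewrite -subr_ge0.
  have h := ler_pM (mulr_ge0 n3 n1) (mulr_ge0 n2 n0) h1 h0.
  rewrite -(@ler_pM2l _ (s1 * s2)) ?mulr_gt0 //.
  rewrite (_ : s1 * s2 * (s3 * s0) = s3 * s1 * (s2 * s0)); last by ring.
  by rewrite (_ : s1 * s2 * (s2 * s1) = s2 ^+ 2 * s1 ^+ 2); last by ring.
have -> : (s2 + x ord0 a * s1) ^+ 2 - (s3 + x ord0 a * s2) * (s1 + x ord0 a * s0) =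
  (s2 ^+ 2 - s3 * s1) + x ord0 a * (s2 * s1 - s3 * s0) + x ord0 a ^+ 2 * (s1 ^+ 2 - s2 * s0)
  by ring.
have e1 : 0 <= x ord0 a * (s2 * s1 - s3 * s0) by rewrite mulr_ge0 // ltW.
have e2 : 0 <= x ord0 a ^+ 2 * (s1 ^+ 2 - s2 * s0) by rewrite mulr_ge0 // exprn_ge0 // ltW.
split; first lra.
move=> hj; have e3 : 0 < x ord0 a ^+ 2 * (s1 ^+ 2 - s2 * s0) by rewrite mulr_gt0 ?exprn_gt0 // Q0s.
lra.
Qed.

End Alg3.
Section Alg4.
Variables (R : realType) (n : nat).
Notation V := 'rV[R]_n.
Notation T := (setTfor 'I_n).
Implicit Types (A B C : {set 'I_n}) (x y : V).

Lemma h_mono (a b b' : R) : 0 < a -> 0 <= b -> b <= b' -> a * b / (a + b) <= a * b' / (a + b').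
Proof.
move=> a0 b0 bb.
have p1 : 0 < a + b by lra. have p2 : 0 < a + b' by lra.
rewrite -subr_ge0.
have -> : a * b' / (a + b') - a * b / (a + b) = a ^+ 2 * (b' - b) / ((a + b) * (a + b')).
  by field; rewrite ?gt_eqF.
apply: divr_ge0; first by apply: mulr_ge0; [exact: sqr_ge0 | rewrite subr_ge0].
by apply: mulr_ge0; apply: ltW.
Qed.

Lemma h_super (a1 a2 b1 b2 : R) : 0 < a1 -> 0 < a2 -> 0 <= b1 -> 0 <= b2 ->
  a1 * b1 / (a1 + b1) + a2 * b2 / (a2 + b2) <= (a1 + a2) * (b1 + b2) / (a1 + a2 + (b1 + b2)).
Proof.
move=> a10 a20 b10 b20.
have p1 : 0 < a1 + b1 by lra. have p2 : 0 < a2 + b2 by lra.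
have p3 : 0 < a1 + a2 + (b1 + b2) by lra.
rewrite -subr_ge0.
have -> : (a1 + a2) * (b1 + b2) / (a1 + a2 + (b1 + b2)) - (a1 * b1 / (a1 + b1) + a2 * b2 / (a2 + b2))
  = (a1 * b2 - a2 * b1) ^+ 2 / ((a1 + b1) * (a2 + b2) * (a1 + a2 + (b1 + b2))).
  by field; rewrite ?gt_eqF.
apply: divr_ge0; first exact: sqr_ge0.
by apply: mulr_ge0; [apply: mulr_ge0|]; apply: ltW.
Qed.

Definition phi j A x := sig j.+1 A x / sig j A x.

Lemma Gamma_add x y : Gamma_plus x -> Gamma_plus y -> Gamma_plus (x + y).
Proof. by move=> Gx Gy i; rewrite mxE addr_gt0. Qed.

Lemma Gamma_scale x (t : R) : Gamma_plus x -> 0 < t -> Gamma_plus (t *: x).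
Proof. by move=> Gx t0 i; rewrite mxE mulr_gt0. Qed.

Lemma phi_pos j A x : Gamma_plus x -> (j.+1 <= #|A|)%N -> 0 < phi j A x.
Proof.
by move=> Gx hj; rewrite /phi divr_gt0 // sig_pos // ltnW.
Qed.

Lemma phi_hom j A x (t : R) : Gamma_plus x -> (j <= #|A|)%N -> 0 < t ->
  phi j A (t *: x) = t * phi j A x.
Proof.
move=> Gx hj t0; rewrite /phi !sig_hom exprS.
have := sig_pos Gx hj => s0.
by field; rewrite ?gt_eqF ?exprn_gt0.
Qed.

Lemma sig1E A x : sig 1 A x = \sum_(i in A) x ord0 i.
Proof.
have := sig_count 0 A x; rewrite mul1r => <-.
by apply: eq_bigr => i _; rewrite sig0 mulr1.
Qed.

Lemma phi_rec k A x : Gamma_plus x -> (k.+2 <= #|A|)%N ->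
  k.+2%:R * phi k.+1 A x =
  \sum_(i in A) x ord0 i * phi k (A :\ i) x / (x ord0 i + phi k (A :\ i) x).
Proof.
move=> Gx hA.
rewrite /phi mulrA -sig_count mulr_suml; apply: eq_bigr => i iA.
have cA : #|A| = #|A :\ i|.+1 by rewrite (cardsD1 i) iA.
have s0 : 0 < sig k (A :\ i) x by apply: sig_pos => //; lia.
have s1 : 0 <= sig k.+1 (A :\ i) x by apply: sig_nn.
have xi := Gx i.
have -> : sig k.+1 A x = sig k.+1 (A :\ i) x + x ord0 i * sig k (A :\ i) x.
  by rewrite -sigS ?setD11 // finset.setD1K.
have p : 0 < sig k.+1 (A :\ i) x + x ord0 i * sig k (A :\ i) x.
  by rewrite ltr_wpDl // mulr_gt0.
have p2 : 0 < x ord0 i + sig k.+1 (A :\ i) x / sig k (A :\ i) x.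
  by rewrite ltr_wpDr // divr_ge0 // ltW.
field; apply/andP; split; rewrite gt_eqF //; lra.
Qed.

Lemma phi_super k : forall A, (k.+1 <= #|A|)%N -> forall x y,
  Gamma_plus x -> Gamma_plus y -> phi k A x + phi k A y <= phi k A (x + y).
Proof.
elim: k => [|k IH] A hA x y Gx Gy.
  rewrite /phi !sig0 !divr1 !sig1E -big_split /=.
  by apply: ler_sum => i _; rewrite mxE.
have Gxy := Gamma_add Gx Gy.
have k0 : (0 < k.+2%:R :> R) by rewrite ltr0n.
rewrite -(@ler_pM2l _ k.+2%:R) // mulrDr !phi_rec // -big_split /=.
apply: ler_sum => i iA.
have cA : #|A| = #|A :\ i|.+1 by rewrite (cardsD1 i) iA.
have hAi : (k.+1 <= #|A :\ i|)%N by lia.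
have px := phi_pos Gx hAi; have py := phi_pos Gy hAi.
apply: le_trans (h_super (Gx i) (Gy i) (ltW px) (ltW py)) _.
rewrite mxE; apply: h_mono; first exact: addr_gt0.
  by rewrite addr_ge0 // ltW.
exact: IH.
Qed.

End Alg4.
Section Final.
Variables (R : realType) (n k : nat).
Hypothesis hk : (k < n)%N.
Notation V := 'rV[R]_n.
Notation T := (setTfor 'I_n).

Let f := fun x : V => S_elem k.+1 x / S_elem k x.
Let c1 : R := ('C(n, k.+1))%:R^-1.
Let c0 : R := ('C(n, k))%:R^-1.

Lemma c1_gt0 : 0 < c1.
Proof. by rewrite /c1 invr_gt0 ltr0n bin_gt0. Qed.
Lemma c0_gt0 : 0 < c0.
Proof. by rewrite /c0 invr_gt0 ltr0n bin_gt0 ltnW. Qed.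

Lemma cardT : #|T| = n.
Proof. by rewrite finset.cardsT card_ord. Qed.

Lemma fE x : Gamma_plus x -> f x = c1 / c0 * phi k T x.
Proof.
move=> Gx; rewrite /f !S_elemE /phi -/c1 -/c0.
have s0 : 0 < sig k T x by apply: sig_pos => //; rewrite cardT ltnW.
have := c0_gt0 => h0.
by field; rewrite !gt_eqF.
Qed.

Lemma concave_gen (F : V -> R) :
  (forall x, Gamma_plus x -> forall t, 0 < t -> F (t *: x) = t * F x) ->
  (forall x y, Gamma_plus x -> Gamma_plus y -> F x + F y <= F (x + y)) ->
  concave_on_Gamma F.
Proof.
move=> Hh Hs x y Gx Gy t t0 t1.
case: (eqVneq t 0) => [->|tn0].
  by rewrite subr0 scale1r scale0r addr0 mul1r mul0r addr0.
case: (eqVneq t 1) => [->|tn1].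
  by rewrite subrr scale0r add0r scale1r mul0r add0r mul1r.
have tp : 0 < t by rewrite lt_def tn0 t0.
have tq : 0 < 1 - t by rewrite subr_gt0 lt_neqAle tn1 t1.
rewrite -(Hh x Gx _ tq) -(Hh y Gy _ tp); apply: Hs; exact: Gamma_scale.
Qed.

Lemma phi_concave m : (m.+1 <= n)%N -> concave_on_Gamma (fun x : V => phi m T x).
Proof.
move=> hm; apply: concave_gen.
  by move=> x Gx t t0; apply: phi_hom => //; rewrite cardT ltnW.
by move=> x y Gx Gy; apply: phi_super => //; rewrite cardT.
Qed.

Lemma f_smooth : smooth_on_Gamma f.
Proof.
have PS : forall j, P (fun y : V => S_elem j y).
  move=> j.
  have HF : forall A : {set 'I_n}, P (fun y : V => \prod_(i in A) y ord0 i) :=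
    fun A => @P_prod R n 'I_n (index_enum 'I_n) (fun i => i \in A)
              (fun i (y : V) => y ord0 i) (fun i => @Px R n i).
  have HS := @P_sum R n {set 'I_n} (index_enum _) (fun A => #|A| == j)
     (fun A (y : V) => \prod_(i in A) y ord0 i) HF.
  have HM := Pmul (@Pc R n ('C(n, j))%:R^-1) HS.
  by apply: (P_ext _ HM) => y; rewrite /S_elem; congr (_ * _).
apply: (@G_smooth _ _ (fun y => S_elem k y)); first exact: PS.
  move=> x Gx; rewrite S_elemE; apply: mulr_gt0.
    by rewrite invr_gt0 ltr0n bin_gt0 ltnW.
  by apply: sig_pos => //; rewrite cardT ltnW.
rewrite /f; exact: (Gmul (GP _ (PS k.+1)) (Ginv _)).
Qed.


Lemma f_hom : homogeneous1 f.
Proof.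
move=> x Gx t t0; rewrite !fE //; last exact: Gamma_scale.
by rewrite phi_hom // ?cardT 1?ltnW // mulrCA.
Qed.

Lemma f_concave : concave_on_Gamma f.
Proof.
have H := phi_concave hk.
move=> x y Gx Gy t t0 t1.
have Gz : Gamma_plus ((1 - t) *: x + t *: y).
  move=> i; rewrite !mxE.
  have := Gx i; have := Gy i => yi xi.
  case: (eqVneq t 0) => [->|tn0]; first by rewrite subr0 mul1r mul0r addr0.
  have tp : 0 < t by rewrite lt_def tn0 t0.
  have h1 : 0 <= (1 - t) * x ord0 i by rewrite mulr_ge0 // ?subr_ge0 // ltW.
  have h2 : 0 < t * y ord0 i by rewrite mulr_gt0.
  lra.
rewrite !fE //.
have c : 0 < c1 / c0 by rewrite divr_gt0 ?c1_gt0 ?c0_gt0.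
have := H x y Gx Gy t t0 t1; rewrite -(ler_pM2l c) => h.
set a := phi k _ x in h *; set b := phi k _ y in h *.
have -> : (1 - t) * (c1 / c0 * a) + t * (c1 / c0 * b) = c1 / c0 * ((1 - t) * a + t * b) by ring.
exact: h.
Qed.

Lemma f_sym : symmetric_on_Gamma f.
Proof. by move=> s x Gx; rewrite /f !S_elemE !sig_perm. Qed.

Lemma Gamma_comb (x y : V) (t : R) : Gamma_plus x -> Gamma_plus y -> 0 <= t -> t <= 1 ->
  Gamma_plus ((1 - t) *: x + t *: y).
Proof.
move=> Gx Gy t0 t1 i; rewrite !mxE.
have := Gx i; have := Gy i => yi xi.
case: (eqVneq t 0) => [->|tn0]; first by rewrite subr0 mul1r mul0r addr0.
have tp : 0 < t by rewrite lt_def tn0 t0.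
have h1 : 0 <= (1 - t) * x ord0 i by rewrite mulr_ge0 // ?subr_ge0 // ltW.
have h2 : 0 < t * y ord0 i by rewrite mulr_gt0.
lra.
Qed.

Lemma finv (x : V) : Gamma_plus x ->
  f (map_mx (fun a => a^-1) x) = c1 / c0 / phi (n - k.+1) T x.
Proof.
move=> Gx; set m := (n - k.+1)%N.
have hm : (n - k)%N = m.+1 by rewrite /m; lia.
have hm1 : (m.+1 <= n)%N by rewrite /m; lia.
rewrite /f !S_elemE -/c1 -/c0.
set xi := map_mx _ x.
have P0 : 0 < \prod_(i < n) x ord0 i by apply: prodr_gt0 => i _; exact: Gx i.
have e1 := sig_compl Gx hk.
have e0 := sig_compl Gx (ltnW hk); rewrite hm in e0.
have E1 : sig k.+1 T xi = sig m T x / \prod_(i < n) x ord0 i.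
  by rewrite -e1 mulfK // gt_eqF.
have E0 : sig k T xi = sig m.+1 T x / \prod_(i < n) x ord0 i.
  by rewrite -e0 mulfK // gt_eqF.
rewrite E1 E0 /phi.
have s0 : 0 < sig m T x by apply: sig_pos => //; rewrite cardT ltnW.
have s1 : 0 < sig m.+1 T x by apply: sig_pos => //; rewrite cardT.
have h0 := c0_gt0.
by field; rewrite !gt_eqF.
Qed.

Lemma f_invc : inverse_concave f.
Proof.
move=> x y Gx Gy t t0 t1; rewrite /inverse_dual.
have Gz := Gamma_comb Gx Gy t0 t1.
rewrite !finv //.
set m := (n - k.+1)%N.
have hm1 : (m.+1 <= n)%N by rewrite /m; lia.
have H := phi_concave hm1 Gx Gy t0 t1.
have hp := phi_pos Gx (j:=m) (A:=T); rewrite cardT in hp; have {}hp := hp hm1.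
have hq := phi_pos Gy (j:=m) (A:=T); rewrite cardT in hq; have {}hq := hq hm1.
have hr := phi_pos Gz (j:=m) (A:=T); rewrite cardT in hr; have {}hr := hr hm1.
move: H hp hq hr; set p := phi m T x; set q := phi m T y; set r := phi m T _ => H hp hq hr.
set c := c1 / c0.
have hc : 0 < c by rewrite divr_gt0 ?c1_gt0 ?c0_gt0.
set w := (1 - t) * p + t * q.
have hw : 0 < w.
  rewrite /w; case: (eqVneq t 0) => [->|tn0]; first by rewrite subr0 mul1r mul0r addr0.
  have tp : 0 < t by rewrite lt_def tn0 t0.
  have h1 : 0 <= (1 - t) * p by rewrite mulr_ge0 // ?subr_ge0 // ltW.
  have h2 : 0 < t * q by rewrite mulr_gt0.
  lra.
have A1 : 0 <= c / w - c / r.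
  have -> : c / w - c / r = c * (r - w) / (w * r) by field; rewrite !gt_eqF.
  by apply: divr_ge0; [apply: mulr_ge0; [apply: ltW | rewrite subr_ge0] | apply: mulr_ge0; apply: ltW].
have A2 : 0 <= (1 - t) * (c / p) + t * (c / q) - c / w.
  have -> : (1 - t) * (c / p) + t * (c / q) - c / w =
     c * t * (1 - t) * (p - q) ^+ 2 / (p * q * w).
    by rewrite /w; field; rewrite !gt_eqF.
  apply: divr_ge0; last by apply: mulr_ge0; [apply: mulr_ge0|]; apply: ltW.
  apply: mulr_ge0; last exact: sqr_ge0.
  by apply: mulr_ge0; [apply: mulr_ge0; [apply: ltW|]|rewrite subr_ge0].
lra.
Qed.

Lemma f_incr : strictly_increasing f.
Proof.
move=> x Gx i.
have xe : forall h, (h *: basis_vec R i + x) ord0 i = x ord0 i + h.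
  by move=> h; rewrite /basis_vec !mxE !eqxx /= mulr1 addrC.
have LN : forall h, h != 0 -> S_elem k.+1 (h *: basis_vec R i + x) =
    S_elem k.+1 x + h * (c1 * sig k (T :\ i) x).
  move=> h _; rewrite !S_elemE -/c1 !(sig_decomp k i) !sig_inv xe; ring.
have [dD LD hD] : exists2 dD, (forall h, h != 0 -> S_elem k (h *: basis_vec R i + x) =
    S_elem k x + h * dD) &
    ((dD = 0 /\ k = 0%N) \/ exists2 k', k = k'.+1 & dD = c0 * sig k' (T :\ i) x).
  case ek: k => [|k'].
    exists 0; last by left.
    by move=> h _; rewrite !S_elemE !sig0 mulr0 addr0.
  exists (c0 * sig k' (T :\ i) x); last by right; exists k'.
  move=> h _; rewrite !S_elemE -ek -/c0 ek !(sig_decomp k' i) !sig_inv xe; ring.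
have [dN eN] := line_deriv LN.
have [dDD eDD] := line_deriv LD.
have D0 : 0 < S_elem k x.
  rewrite S_elemE; apply: mulr_gt0; first exact: c0_gt0.
  by apply: sig_pos => //; rewrite cardT ltnW.
have Dx0 : S_elem k x != 0 by rewrite gt_eqF.
have [dDi eDi] := inv_deriv Dx0 dDD.
have E : derive f x (basis_vec R i) =
  S_elem k.+1 x * (- ((S_elem k x)^-1 * (S_elem k x)^-1) * dD) +
  (S_elem k x)^-1 * (c1 * sig k (T :\ i) x).
  by rewrite -eDD -eN -eDi; exact: (mul_deriv dN dDi).2.
rewrite E.
case: hD => [[-> k0]|[k' ek ->]].
  rewrite mulr0 mulr0 add0r; apply: mulr_gt0; first by rewrite invr_gt0.
  by rewrite k0 sig0 mulr1 c1_gt0.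
have hB : (k'.+1 <= #|T :\ i|)%N.
  have hc := cardsD1 i T; rewrite finset.in_setT cardT add1n in hc.
  have hk' := hk; rewrite ek hc ltnS in hk'; exact: hk'.
have Q := (newton Gx (T :\ i) k').2 hB.
have c1p := c1_gt0; have c0p := c0_gt0.
move: D0 Dx0; rewrite !S_elemE -/c1 -/c0 ek (sig_decomp k'.+1 i) (sig_decomp k' i) => D0 Dx0.
set a1 := sig k'.+2 _ x in Q *; set b1 := sig k'.+1 _ x in Q *.
set b0 := sig k' _ x in Q *.
have -> : c1 * (a1 + x ord0 i * b1) *
    (- ((c0 * (b1 + x ord0 i * b0))^-1 * (c0 * (b1 + x ord0 i * b0))^-1) * (c0 * b0)) +
    (c0 * (b1 + x ord0 i * b0))^-1 * (c1 * b1) =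
    c1 * c0 * (b1 ^+ 2 - a1 * b0) / (c0 * (b1 + x ord0 i * b0)) ^+ 2.
  by field; move: Dx0; rewrite mulf_eq0 negb_or andbC.
by apply: divr_gt0; [rewrite !mulr_gt0 | rewrite exprn_gt0].
Qed.

End Final.

Local Close Scope classical_set_scope.

Theorem theorem2p6 (R : realType) (n k : nat) : (k < n)%N ->
  class_S (fun x : 'rV[R]_n => S_elem k.+1 x / S_elem k x).
Proof.
move=> hk; split; last exact: f_sym.
split.
- exact: f_smooth hk.
- exact: f_hom hk.
- exact: f_incr hk.
- exact: f_concave hk.
- exact: f_invc hk.
Qed.
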